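(* Let the one-period market and the risk measure $\rho: L \to (-\infty,\infty]$ be as described in the context. Assume that $\Pi^\rho_0 = \{\mathbf{0}\}$, that $\rho_1 \in \mathbb{R}$, and that $\rho$ satisfies the Fatou property on $\mathcal{X} = \{X_\pi : \pi \in \mathbb{R}^d\}$, i.e. whenever $X_n, X \in \mathcal{X}$ with $X_n \to X$ $\mathbb{P}$-a.s. and $|X_n| \le Y$ $\mathbb{P}$-a.s. for some $Y \in L$, then $\rho(X) \le \liminf_{n\to\infty} \rho(X_n)$. Then for every $\nu \ge 0$ the set $\Pi^\rho_\nu$ of $\rho$-optimal portfolios for $\nu$ is nonempty and compact.
   Context: Let $(\Omega,\mathcal{F},\mathbb{P})$ be a probability space. The market consists of a riskless asset with $S^0_0 = 1$, $S^0_1 = 1+r$, $r > -1$, and $d$ risky assets $S^1,\dots,S^d$ with constants $S^i_0 > 0$ and real-valued $\mathcal{F}$-measurable $S^i_1$. Returns: $R^i := (S^i_1 - S^i_0)/S^i_0$, $R = (R^1,\dots,R^d)$. Standing assumptions: the market is nonredundant (if $\theta \in \mathbb{R}^{1+d}$ and $\sum_{i=0}^d \theta^i S^i_t = 0$ $\mathbb{P}$-a.s. for $t\in\{0,1\}$, then $\theta = 0$); each $R^i \in L^1(\mathbb{P})$ with $\mu^i := \mathbb{E}[R^i]$; nondegeneracy: $\mu^i \neq r$ for some $i$. A portfolio is $\pi \in \mathbb{R}^d$; its excess return is $X_\pi := \pi\cdot(R - r\mathbf{1})$ with $\mathbf{1} = (1,\dots,1)$. For $\nu \in \mathbb{R}$,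 $\Pi_\nu := \{\pi \in \mathbb{R}^d : \mathbb{E}[X_\pi] = \nu\}$. $L$ is a Riesz space of random variables with $L^\infty \subset L \subset L^1$ containing all $X_\pi$, and $\rho: L \to (-\infty,\infty]$ is monotone ($X_1 \le X_2$ a.s. implies $\rho(X_1) \ge \rho(X_2)$), cash-invariant ($\rho(X+c) = \rho(X) - c$ for $c\in\mathbb{R}$) and positively homogeneous ($\rho(\lambda X) = \lambda\rho(X)$ for $\lambda \ge 0$). For $\nu \ge 0$: $\rho_\nu := \inf\{\rho(X_\pi) : \pi \in \Pi_\nu\} \in [-\infty,\infty]$, and $\Pi^\rho_\nu$ is the set of $\pi \in \Pi_\nu$ with $\rho(X_\pi) < \infty$ and $\rho(X_\pi) \le \rho(X_{\pi'})$ for all $\pi' \in \Pi_\nu$ ($\rho$-optimal portfolios for $\nu$). *)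

(* Defs.v *)
From HB Require Import structures.
From mathcomp Require Import all_boot all_order all_algebra.
From mathcomp Require Import all_classical all_reals all_analysis.
Set Implicit Arguments. Unset Strict Implicit. Unset Printing Implicit Defensive.
Import Order.TTheory GRing.Theory Num.Theory.
Import numFieldNormedType.Exports.
Local Open Scope classical_set_scope.
Local Open Scope ring_scope.

Section Market.
Context {dT : measure_display} {T : measurableType dT} {R : realType}.
Variable (P : probability T R).
Variable (n : nat).

Definition ret (S0 : 'I_n -> R) (S1 : 'I_n -> T -> R) (i : 'I_n) : T -> R :=
  fun w => (S1 i w - S0 i) / S0 i.

Definition Xpi (S0 : 'I_n -> R) (S1 : 'I_n -> T -> R) (r : R) (pi : 'rV[R]_n)
  : T -> R := fun w => \sum_(i < n) pi 0 i * (ret S0 S1 i w - r).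

Definition expect (X : T -> R) : \bar R := (\int[P]_w (X w)%:E)%E.

Definition Pinu S0 S1 r (nu : R) : set 'rV[R]_n :=
  [set pi | expect (Xpi S0 S1 r pi) = nu%:E].

Definition rho_nu (rho : (T -> R) -> \bar R) S0 S1 r (nu : R) : \bar R :=
  ereal_inf [set rho (Xpi S0 S1 r pi) | pi in Pinu S0 S1 r nu].

Definition Pirho (rho : (T -> R) -> \bar R) S0 S1 r (nu : R) : set 'rV[R]_n :=
  [set pi | Pinu S0 S1 r nu pi /\ (rho (Xpi S0 S1 r pi) < +oo)%E /\
            forall pi', Pinu S0 S1 r nu pi' ->
              (rho (Xpi S0 S1 r pi) <= rho (Xpi S0 S1 r pi'))%E].

Definition nonredundant S0 S1 r : Prop :=
  forall (th0 : R) (th : 'rV[R]_n),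
    th0 + \sum_(i < n) th 0 i * S0 i = 0 ->
    {ae P, forall w, th0 * (1 + r) + \sum_(i < n) th 0 i * S1 i w = 0} ->
    th0 = 0 /\ th = 0.

Definition essbounded (X : T -> R) : Prop :=
  measurable_fun setT X /\ exists M : R, {ae P, forall w, `|X w| <= M}.

Definition riesz_L (L : set (T -> R)) : Prop :=
  [/\ (forall X Y, L X -> L Y -> L (X \+ Y)),
      (forall (a : R) X, L X -> L (fun w => a * X w)),
      (forall X Y, L X -> L Y -> L (fun w => Num.max (X w) (Y w))),
      (forall X, essbounded X -> L X) &
      (forall X, L X -> measurable_fun setT X /\ P.-integrable setT (EFin \o X))].

Definition risk_measure (L : set (T -> R)) (rho : (T -> R) -> \bar R) : Prop :=
  [/\ (forall X, L X -> rho X != -oo%E),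
      (forall X1 X2, L X1 -> L X2 -> {ae P, forall w, X1 w <= X2 w} ->
         (rho X2 <= rho X1)%E),
      (forall X (c : R), L X -> rho (fun w => X w + c) = (rho X - c%:E)%E) &
      (forall X (l : R), L X -> 0 <= l -> rho (fun w => l * X w) = (l%:E * rho X)%E)].

Definition fatou_on_X (L : set (T -> R)) (rho : (T -> R) -> \bar R) S0 S1 r : Prop :=
  forall (Xn : nat -> T -> R) (X : T -> R),
    (forall k, exists pi, Xn k = Xpi S0 S1 r pi) ->
    (exists pi, X = Xpi S0 S1 r pi) ->
    {ae P, forall w, (fun k => Xn k w) @ \oo --> X w} ->
    (exists Y, L Y /\ (forall k, {ae P, forall w, `|Xn k w| <= Y w})) ->
    (rho X <= limn_einf (fun k => rho (Xn k)))%E.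

End Market.

(* Main.v *)
Require Import Defs.
From HB Require Import structures.
From mathcomp Require Import all_boot all_order all_algebra.
From mathcomp Require Import all_classical all_reals all_analysis.
Import Order.TTheory GRing.Theory Num.Theory.
Import numFieldNormedType.Exports.
Local Open Scope classical_set_scope.
Local Open Scope ring_scope.
From mathcomp Require Import lra.
Section Pf.
Context (dT : measure_display) (T : measurableType dT) (R : realType)
  (P : probability T R) (n : nat) (r : R) (S0 : 'I_n -> R) (S1 : 'I_n -> T -> R).

Lemma entry_le (p : 'rV[R]_n) i : `|p 0 i| <= `|p|.
Proof.
change (`|p 0 i| <= mx_norm p); rewrite mx_normrE; apply/bigmax_geP; right => /=.
by exists (0, i).
Qed.

Lemma XpiZ a p : Xpi S0 S1 r (a *: p) = fun w => a * Xpi S0 S1 r p w.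
Proof.
apply/funext => w; rewrite /Xpi mulr_sumr; apply: eq_bigr => i _.
by rewrite mxE mulrA.
Qed.

Lemma XpiB p q w : Xpi S0 S1 r p w - Xpi S0 S1 r q w = Xpi S0 S1 r (p - q) w.
Proof.
rewrite /Xpi -sumrB; apply: eq_bigr => i _.
by rewrite !mxE mulrBl.
Qed.

Definition D w := \sum_i `|ret S0 S1 i w - r|.

Lemma Xpi_norm p w : `|Xpi S0 S1 r p w| <= `|p| * D w.
Proof.
apply: le_trans (ler_norm_sum _ _ _) _.
rewrite /D mulr_sumr; apply: ler_sum => i _.
by rewrite normrM ler_wpM2r// entry_le.
Qed.

Variable L : set (T -> R).
Hypothesis hL : riesz_L P L.
Hypothesis hX : forall p, L (Xpi S0 S1 r p).

Lemma Xpi_delta i w : Xpi S0 S1 r (delta_mx 0 i) w = ret S0 S1 i w - r.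
Proof.
rewrite /Xpi (bigD1 i) //= big1 ?addr0; first by rewrite mxE !eqxx mul1r.
by move=> j /negPf ji; rewrite mxE ji andbF mul0r.
Qed.

Lemma L_D a : L (fun w => a * D w).
Proof.
case: hL => hadd hscal hmax _ _.
apply: (hscal).
have habs i : L (fun w => `|ret S0 S1 i w - r|).
  have -> : (fun w => `|ret S0 S1 i w - r|) =
     (fun w => Num.max (Xpi S0 S1 r (delta_mx 0 i) w)
                 ((fun w => (-1) * Xpi S0 S1 r (delta_mx 0 i) w) w)).
    by apply/funext => w /=; rewrite Xpi_delta mulN1r maxrN.
  by apply: hmax => //; apply: (hscal).
rewrite /D; elim: (index_enum _) => [|j s IH].
  have -> : (fun w => \sum_(i <- [::]) `|ret S0 S1 i w - r|) =
     (fun w => 0 * Xpi S0 S1 r 0 w).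
    by apply/funext => w; rewrite big_nil mul0r.
  exact: (hscal).
have -> : (fun w => \sum_(i <- j :: s) `|ret S0 S1 i w - r|) =
   ((fun w => `|ret S0 S1 j w - r|) \+ (fun w => \sum_(i <- s) `|ret S0 S1 i w - r|)).
  by apply/funext => w; rewrite big_cons.
exact: hadd.
Qed.

Variable rho : (T -> R) -> \bar R.
Hypothesis hF : fatou_on_X P L rho S0 S1 r.

Lemma fatou_seq (u : nat -> 'rV[R]_n) v B : (forall j, `|u j| <= B) ->
  u @ \oo --> v ->
  (rho (Xpi S0 S1 r v) <= limn_einf (fun j => rho (Xpi S0 S1 r (u j))))%E.
Proof.
move=> uB uv; apply: hF.
- by move=> k; exists (u k).
- by exists v.
- apply: aeW => w /=.
  have D0 : 0 <= D w by apply: sumr_ge0.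
  apply/cvgrPdist_le => e e0.
  have e'0 : 0 < e / (D w + 1) by rewrite divr_gt0 // ltr_wpDl.
  move/cvgrPdist_le : uv => /(_ _ e'0).
  apply: filterS => j hj.
  rewrite XpiB; apply: le_trans (Xpi_norm _ _) _.
  apply: le_trans (ler_wpM2r D0 hj) _.
  rewrite mulrAC ler_pdivrMr ?ltr_wpDl //.
  by rewrite ler_wpM2l ?ltW // ltrDl.
- exists (fun w => B * D w); split; first exact: L_D.
  move=> k; apply: aeW => w.
  apply: le_trans (Xpi_norm _ _) _.
  by rewrite ler_wpM2r // sumr_ge0.
Qed.

Hypothesis intR : forall i, P.-integrable setT (EFin \o ret S0 S1 i).
Definition mm i := fine (expect P (ret S0 S1 i)) - r.
Definition lin (p : 'rV[R]_n) := \sum_i p 0 i * mm i.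

Lemma int_c i : P.-integrable setT (fun x => (ret S0 S1 i x - r)%:E).
Proof.
have := integrableB measurableT (intR i) (finite_measure_integrable_cst P r measurableT).
apply: eq_integrable; first exact: measurableT.
by move=> x _ /=; rewrite EFinB.
Qed.

Lemma expectXpi p : expect P (Xpi S0 S1 r p) = (lin p)%:E.
Proof.
have mT : measurable (setT : set T) := measurableT.
rewrite /expect /Xpi.
under eq_integral do rewrite -sumEFin.
rewrite integral_sum //; last first.
  move=> i; under eq_fun do rewrite EFinM.
  exact: integrableZl (int_c i).
rewrite /lin -sumEFin; apply: eq_bigr => i _.
under eq_integral do rewrite EFinM.
rewrite integralZl //; last exact: int_c.
rewrite EFinM; congr (_ * _)%E.
under eq_integral do rewrite EFinB.
rewrite (integralB measurableT (intR i) (finite_measure_integrable_cst P r measurableT)).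
rewrite (integral_cst P mT r%:E).
rewrite /mm EFinB fineK; last exact: integrable_fin_num (intR i).
congr (_ - _)%E.
by rewrite -[RHS]mule1; congr (_ * _)%E; exact: probability_setT.
Qed.

Lemma linB p q : lin p - lin q = lin (p - q).
Proof. by rewrite /lin -sumrB; apply: eq_bigr => i _; rewrite !mxE mulrBl. Qed.

Lemma linZ a p : lin (a *: p) = a * lin p.
Proof. by rewrite /lin mulr_sumr; apply: eq_bigr => i _; rewrite mxE mulrA. Qed.

Lemma small0 (a K : R) : (forall j : nat, `|a| <= K / j.+1%:R) -> a = 0.
Proof.
move=> h; apply/eqP; apply/negPn/negP => a0.
have K0 : 0 <= K by have := h 0%N; rewrite divr1; apply: le_trans.
have e0 : 0 < `|a| / (K + 1) by rewrite divr_gt0 ?normr_gt0 // ltr_wpDl.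
have := near_infty_natSinv_lt (PosNum e0).
case => N _ HN.
have := HN N (leqnn N) => /=.
set e := `|a| / (K + 1); set i := N.+1%:R^-1 => ie.
have hK : K * i <= K * e by rewrite ler_wpM2l // ltW.
have he : e * (K + 1) = `|a| by rewrite /e divfK // gt_eqF // ltr_wpDl.
have hN := h N; rewrite -/i in hN.
have ha : 0 < `|a| by rewrite normr_gt0.
nra.
Qed.

Definition Kl := \sum_i `|mm i|.

Lemma Kl0 : 0 <= Kl.
Proof. exact: sumr_ge0. Qed.

Lemma lin_norm p : `|lin p| <= `|p| * Kl.
Proof.
apply: le_trans (ler_norm_sum _ _ _) _.
rewrite /Kl mulr_sumr; apply: ler_sum => i _.
by rewrite normrM ler_wpM2r// entry_le.
Qed.

Lemma liminf_leC (u : (\bar R)^nat) (C : \bar R) :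
  (forall k, (u k <= C)%E) -> (limn_einf u <= C)%E.
Proof.
move=> h; rewrite limn_einf_lim; apply: lime_le; first exact: is_cvg_einfs.
apply: nearW => N /=.
apply: le_trans (h N).
by apply: ereal_inf_lbound; exists N => /=.
Qed.

Lemma liminf_le0 (u : (\bar R)^nat) :
  (forall k, (u k <= (k.+1%:R^-1)%:E)%E) -> (limn_einf u <= 0)%E.
Proof.
move=> h; rewrite limn_einf_lim; apply: lime_le; first exact: is_cvg_einfs.
apply: nearW => N /=.
apply/lee_addgt0Pr => e e0; rewrite add0e.
have [M _ HM] := near_infty_natSinv_lt (PosNum e0).
apply: (@le_trans _ _ (u (maxn N M))).
  by apply: ereal_inf_lbound; exists (maxn N M) => //=; rewrite leq_maxl.
apply: le_trans (h _) _; rewrite lee_fin ltW //.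
exact: (HM (maxn N M) (leq_maxr _ _)).
Qed.

Lemma ball_cvg (q : nat -> 'rV[R]_n) v :
  (forall j, ball v (j.+1%:R^-1) (q j)) -> q @ \oo --> v.
Proof.
move=> h; apply/cvgrPdist_lt => e e0.
have [M _ HM] := near_infty_natSinv_lt (PosNum e0).
exists M => // j Mj /=.
have := h j; rewrite -ball_normE /ball_ => hj.
exact: lt_trans hj (HM _ Mj).
Qed.


Hypothesis hrho : risk_measure P L rho.
Hypothesis h0 : Pirho P rho S0 S1 r 0 = [set 0].

Lemma rhoZ a p : 0 <= a ->
  rho (Xpi S0 S1 r (a *: p)) = (a%:E * rho (Xpi S0 S1 r p))%E.
Proof. by move=> a0; rewrite XpiZ; case: hrho => _ _ _ hom; exact: hom. Qed.

Lemma rho0 : rho (Xpi S0 S1 r 0) = 0%E.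
Proof.
transitivity (rho (Xpi S0 S1 r (0 *: 0))); first by rewrite scale0r.
by rewrite rhoZ // mul0e.
Qed.

Lemma pos0 u : lin u = 0 -> (rho (Xpi S0 S1 r u) <= 0)%E -> u = 0.
Proof.
move=> lu ru.
have : Pirho P rho S0 S1 r 0 u; last by rewrite h0.
have : Pirho P rho S0 S1 r 0 0 by rewrite h0.
case=> _ [_ h0min].
split; first by rewrite /Pinu /= expectXpi lu.
split; first by apply: le_lt_trans ru _; rewrite ltey.
by move=> p' hp'; apply: le_trans ru _; rewrite -rho0; exact: h0min.
Qed.

Definition K nu C := [set p : 'rV[R]_n |
  lin p = nu /\ (rho (Xpi S0 S1 r p) <= C%:E)%E].

Lemma K_closed nu C : closed (K nu C).
Proof.
move=> v cl.
have hj j : exists q, K nu C q /\ ball v (j.+1%:R^-1) q.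
  have jp : 0 < j.+1%:R^-1 :> R by rewrite invr_gt0.
  have [q [Kq bq]] := cl _ (nbhsx_ballx v (j.+1%:R^-1) jp).
  by exists q.
have [q hq] := choice hj.
have qv : q @ \oo --> v by apply: ball_cvg => j; case: (hq j).
have nq j : `|v - q j| < j.+1%:R^-1.
  by case: (hq j) => _; rewrite -ball_normE /ball_.
split.
- have : lin v - nu = 0.
    apply: (@small0 _ Kl) => j.
    case: (hq j) => [[lq _] _]; rewrite -lq linB.
    apply: le_trans (lin_norm _) _; rewrite mulrC (ler_wpM2l Kl0) // ltW //.
  by move/eqP; rewrite subr_eq0 => /eqP.
- apply: le_trans (fatou_seq q v (`|v| + 1) _ qv) _.
  + move=> j; have -> : q j = v - (v - q j) by rewrite opprB addrC subrK.
    apply: le_trans (ler_normB _ _) _; rewrite lerD2l.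
    apply: le_trans (ltW (nq j)) _.
    by rewrite invr_le1 // ?ler1n // unitfE.
  + by apply: liminf_leC => k; case: (hq k) => [[_ ]].
Qed.


Lemma K_bounded nu C : bounded_set (K nu C).
Proof.
apply: contrapT => nb.
pose A := `|C| + 1.
have A1 : 1 <= A by rewrite /A lerDr.
have hk k : exists p, K nu C p /\ k.+1%:R * A < `|p|.
  apply: contrapT => hn; apply: nb.
  exists (k.+1%:R * A); split; first exact: num_real.
  move=> M hM p Kp /=.
  apply: le_trans (ltW hM); rewrite leNgt; apply/negP => hp; apply: hn.
  by exists p.
have [pk hpk] := choice hk.
pose vk k := `|pk k|^-1 *: pk k.
have pkpos k : 0 < `|pk k|.
  case: (hpk k) => _; apply: le_lt_trans.
  by rewrite mulr_ge0 // (le_trans _ A1).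
have nvk k : `|vk k| = 1.
  by rewrite /vk normrZ normfV normr_id mulVf // gt_eqF.
pose Q := [set v : 'rV[R]_n | forall i, v ord0 i \in `[(-1 : R), 1]].
have cQ : compact Q.
  apply: (@rV_compact _ _ (fun=> `[(-1 : R), 1]%classic)).
  by move=> _; apply: segment_compact.
have Qv k : Q (vk k).
  move=> i; rewrite in_itv /= -ler_norml -(nvk k).
  exact: entry_le.
have [u [Qu clu]] : Q `&` cluster (vk @ \oo) !=set0.
  by apply: cQ; exists 0%N => // k _; exact: Qv.
have hsub j : exists k, (j <= k)%N /\ ball u (j.+1%:R^-1) (vk k).
  have jp : 0 < j.+1%:R^-1 :> R by rewrite invr_gt0.
  have [_ [[k jk <-] b]] := clu (vk @` [set k | (j <= k)%N]) (ball u (j.+1%:R^-1))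
    (ex_intro2 _ _ j I (fun k jk => ex_intro2 _ _ k jk erefl)) (nbhsx_ballx u _ jp).
  by exists k.
have [w hw] := choice hsub.
pose z j := vk (w j).
have zu : z @ \oo --> u by apply: ball_cvg => j; case: (hw j).
have nz j : `|u - z j| < j.+1%:R^-1.
  by case: (hw j) => _; rewrite -ball_normE /ball_.
have u0 : u != 0.
  apply/eqP => u0; have := nz 1%N; rewrite u0 sub0r normrN nvk.
  have h2 : (2^-1 : R) < 1 by rewrite invf_lt1 // ltr1n.
  by move=> h; have := lt_trans h h2; rewrite ltxx.
have pkw j : j.+1%:R <= `|pk (w j)|.
  case: (hpk (w j)) => _ h; apply: le_trans (ltW h).
  rewrite -[X in X <= _]mulr1 ler_pM //.
  by rewrite ler_nat ltnS (hw j).1.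
have lu : lin u = 0.
  apply: (@small0 _ (Kl + `|nu|)) => j.
  have e1 : lin u = (lin u - lin (z j)) + lin (z j) by rewrite subrK.
  rewrite e1; apply: le_trans (ler_normD _ _) _.
  rewrite linB /z /vk linZ (hpk (w j)).1.1 mulrDl.
  apply: lerD.
  - apply: le_trans (lin_norm _) _.
    by rewrite [X in X <= _]mulrC ler_wpM2l ?Kl0 // (ltW (nz j)).
  - rewrite normrM normfV normr_id [X in X <= _]mulrC ler_wpM2l //.
    by rewrite lef_pV2 ?posrE // pkw.
have ru : (rho (Xpi S0 S1 r u) <= 0)%E.
  apply: le_trans (fatou_seq z u 1 _ zu) _; first by move=> j; rewrite nvk.
  apply: liminf_le0 => j.
  rewrite /z /vk rhoZ ?invr_ge0 //.
  apply: le_trans (lee_wpmul2l _ (hpk (w j)).1.2) _; first by rewrite lee_fin invr_ge0.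
  rewrite -EFinM lee_fin.
  have hx : j.+1%:R * A < `|pk (w j)|.
    apply: le_lt_trans (hpk (w j)).2; rewrite ler_wpM2r ?(le_trans _ A1) //.
    by rewrite ler_nat ltnS (hw j).1.
  have CA : C <= A by rewrite /A; apply: le_trans (ler_norm C) _; rewrite lerDl.
  set x := `|pk (w j)| in hx *.
  have xp : 0 < x by exact: pkpos.
  set y := j.+1%:R^-1 :> R.
  have yj : y * j.+1%:R = 1 by rewrite mulVf.
  have xx : x^-1 * x = 1 by rewrite mulVf // gt_eqF.
  have y0 : 0 < y by rewrite invr_gt0.
  have x0 : 0 < x^-1 by rewrite invr_gt0.
  set jj := j.+1%:R :> R in yj hx.
  nra.
by rewrite (pos0 _ lu ru) eqxx in u0.
Qed.

Lemma K_compact nu C : compact (K nu C).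
Proof. exact: bounded_closed_compact (K_bounded nu C) (K_closed nu C). Qed.


Hypothesis h1 : rho_nu P rho S0 S1 r 1 \is a fin_num.

Lemma Pinu_lin nu p : Pinu P S0 S1 r nu p <-> lin p = nu.
Proof. by rewrite /Pinu /= expectXpi; split => [[]|->]. Qed.

Lemma rho_real p : (rho (Xpi S0 S1 r p) < +oo)%E ->
  exists c, rho (Xpi S0 S1 r p) = c%:E.
Proof.
case E: (rho _) => [c| |] //; first by exists c.
by case: hrho => hN _ _ _; have := hN _ (hX p); rewrite E.
Qed.

Lemma K_mono nu s t : s <= t -> K nu s `<=` K nu t.
Proof. by move=> st p [lp rp]; split => //; apply: le_trans rp _; rewrite lee_fin. Qed.

Lemma opt_of nu ps : Pinu P S0 S1 r nu ps ->
  (rho (Xpi S0 S1 r ps) <= rho_nu P rho S0 S1 r nu)%E ->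
  (rho (Xpi S0 S1 r ps) < +oo)%E -> Pirho P rho S0 S1 r nu ps.
Proof.
move=> Pps le lt; split => //; split => // p' Pp'.
apply: le_trans le _; apply: ereal_inf_lbound; by exists p'.
Qed.

Lemma exists_opt nu : 0 <= nu -> exists ps, Pirho P rho S0 S1 r nu ps.
Proof.
move=> nu0.
have [_ [p1 Pp1 <-] rp1] : exists2 y,
    [set rho (Xpi S0 S1 r p) | p in Pinu P S0 S1 r 1] y & (y < +oo)%E.
  apply: ereal_inf_lt; rewrite ltey; move: h1; rewrite fin_numE.
  by case/andP.
have [c1 hc1] := rho_real _ rp1.
pose p0 := nu *: p1.
have Pp0 : lin p0 = nu by rewrite linZ (proj1 (Pinu_lin _ _) Pp1) mulr1.
have hC0 : rho (Xpi S0 S1 r p0) = (nu * c1)%:E by rewrite rhoZ // hc1 EFinM.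
set C0 := nu * c1 in hC0.
set rn := rho_nu P rho S0 S1 r nu.
have [le0|lt0] := leP (rho (Xpi S0 S1 r p0)) rn.
  exists p0; apply: opt_of => //; first exact/Pinu_lin.
  by rewrite hC0 ltry.
rewrite hC0 in lt0.
pose I := [set t : R | (rn < t%:E)%E].
pose B t := K nu (Num.min t C0).
have FF : Filter (filter_from I B).
  apply: filter_from_filter; first by exists C0.
  move=> i j Ii Ij; exists (Num.min i j).
    by rewrite /I /= EFin_min lt_min Ii Ij.
  move=> p Bp; split; apply: K_mono Bp.
    by rewrite le_min !ge_min !lexx !orbT.
  by rewrite le_min !ge_min !lexx !orbT.
have PF : ProperFilter (filter_from I B).
  apply: filter_from_proper => t It.
  have : (rn < (Num.min t C0)%:E)%E by rewrite EFin_min lt_min It lt0.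
  move/ereal_inf_lt => [_ [p Pp <-] rp]; exists p; split.
    exact/Pinu_lin.
  exact: ltW.
have FK : filter_from I B (K nu C0).
  by exists C0 => //; rewrite /B minxx.
have [ps [Kps clps]] := K_compact nu C0 (filter_from I B) PF FK.
have hps t : (rn < t%:E)%E -> (rho (Xpi S0 S1 r ps) <= t%:E)%E.
  move=> It.
  have : B t ps.
    apply: K_closed => B' nB'.
    by apply: clps => //; exists t.
  case=> _ h; apply: le_trans h _; rewrite lee_fin ge_min lexx //.
have [b hb] : exists b, rho (Xpi S0 S1 r ps) = b%:E.
  by apply: rho_real; apply: le_lt_trans Kps.2 _; rewrite ltry.
exists ps; apply: opt_of.
- by apply/Pinu_lin; exact: Kps.1.
- rewrite leNgt; apply/negP => hlt.
  move: (hlt); rewrite hb => /ereal_inf_lt [_ [p Pp <-] rp].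
  have [c hc] := rho_real _ (lt_trans rp (ltry _)).
  rewrite hc lte_fin in rp.
  have rnc : (rn <= c%:E)%E by rewrite -hc; apply: ereal_inf_lbound; exists p.
  have hin : (rn < ((c + b) / 2)%:E)%E.
    by apply: le_lt_trans rnc _; rewrite lte_fin ltr_pdivlMr //; lra.
  have := hps _ hin; rewrite hb lee_fin ler_pdivlMr //; lra.
- by rewrite hb ltry.
Qed.


Lemma main_res nu : 0 <= nu ->
  Pirho P rho S0 S1 r nu !=set0 /\ compact (Pirho P rho S0 S1 r nu).
Proof.
move=> nu0; have [ps Pps] := exists_opt nu nu0.
split; first by exists ps.
case: (Pps) => Pnu [lt opt].
have [b hb] := rho_real _ lt.
have -> : Pirho P rho S0 S1 r nu = K nu b.
  apply/seteqP; split => p.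
  - case=> Pp [_ optp]; split; first exact/Pinu_lin.
    by rewrite -hb; exact: optp.
  - case=> lp rp; split; first exact/Pinu_lin.
    split; first by apply: le_lt_trans rp _; rewrite ltry.
    by move=> p' Pp'; apply: le_trans rp _; rewrite -hb; exact: opt.
exact: K_compact.
Qed.

End Pf.

Theorem theorem3p11 (dT : measure_display) (T : measurableType dT) (R : realType)
  (P : probability T R) (n : nat)
  (r : R) (S0 : 'I_n -> R) (S1 : 'I_n -> T -> R)
  (L : set (T -> R)) (rho : (T -> R) -> \bar R) :
  -1 < r ->
  (forall i, 0 < S0 i) ->
  (forall i, measurable_fun setT (S1 i)) ->
  nonredundant P S0 S1 r ->
  (forall i, P.-integrable setT (EFin \o ret S0 S1 i)) ->
  (exists i, expect P (ret S0 S1 i) != r%:E) ->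
  riesz_L P L ->
  (forall pi, L (Xpi S0 S1 r pi)) ->
  risk_measure P L rho ->
  Pirho P rho S0 S1 r 0 = [set 0] ->
  rho_nu P rho S0 S1 r 1 \is a fin_num ->
  fatou_on_X P L rho S0 S1 r ->
  forall nu : R, 0 <= nu ->
    Pirho P rho S0 S1 r nu !=set0 /\ compact (Pirho P rho S0 S1 r nu).
Proof.
move=> _ _ _ _ intR _ hL hX hrho h0 h1 hF nu nu0.
exact: (@main_res _ _ _ _ _ _ _ _ _ hL hX _ hF intR hrho h0 h1 nu nu0).
Qed.
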